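(* For $n$ large enough, there are linear trifferent codes of length $n$ and size at least $\tfrac13(9/5)^{n/4}$.
   Context: A linear trifferent code of length $n$ is a linear subspace $C\subseteq\mathbb{F}_3^n$ such that for any three distinct $x,y,z\in C$ there is a coordinate $i$ with $\{x_i,y_i,z_i\}=\mathbb{F}_3$. *)

(* Defs.v *)
From Stdlib Require Import Reals.
From mathcomp Require Import all_boot all_algebra.
Set Implicit Arguments. Unset Strict Implicit. Unset Printing Implicit Defensive.
Import GRing.Theory.
Local Open Scope ring_scope.

Definition is_linear_code (n : nat) (C : {set 'rV['F_3]_n}) : Prop :=
  [/\ 0 \in C,
      (forall x y, x \in C -> y \in C -> x + y \in C) &
      (forall (a : 'F_3) x, x \in C -> a *: x \in C)].

Definition is_trifferent (n : nat) (C : {set 'rV['F_3]_n}) : Prop :=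
  forall x y z, x \in C -> y \in C -> z \in C ->
    x != y -> y != z -> x != z ->
    exists i : 'I_n, [set x ord0 i; y ord0 i; z ord0 i] = [set: 'F_3].

(* Main.v *)
Require Import Defs.
From Stdlib Require Import Reals Lra Psatz.
From mathcomp Require Import all_boot all_algebra.
Set Implicit Arguments. Unset Strict Implicit. Unset Printing Implicit Defensive.

Section RealPart.
Local Open Scope R_scope.
Lemma INR_expn (a b : nat) : INR (a ^ b)%N = (INR a ^ b).
Proof. elim: b => [|b IH] //=. by rewrite expnS mulnE mult_INR IH. Qed.

Lemma INR_muln (a b : nat) : INR (a * b)%N = (INR a * INR b).
Proof. by rewrite mulnE mult_INR. Qed.

Lemma real_part (n m r k : nat) : n = (m * 4 + r)%N -> (r < 4)%N ->
  (4 * 81 ^ m <= 9 ^ k.+1 * 25 ^ m)%N ->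
  Rle (Rmult (Rinv (INR 3)) (Rpower (Rdiv (INR 9) (INR 5)) (Rdiv (INR n) (INR 4))))
          (INR (3 ^ k)%N).
Proof.
move=> -> hr /leP h.
have {}h := le_INR _ _ h.
rewrite !INR_muln !INR_expn in h.
rewrite INR_expn.
have e9 : INR 9 = 9 by simpl; lra.
have e5 : INR 5 = 5 by simpl; lra.
have e3 : INR 3 = 3 by simpl; lra.
have e4 : INR 4 = 4 by simpl; lra.
have e81 : INR 81 = (9 * 9) by simpl; lra.
have e25 : INR 25 = (5 * 5) by simpl; lra.
rewrite e81 e25 e9 e4 in h.
rewrite e9 e5 e3 e4.
rewrite plus_INR INR_muln e4.
have -> : ((INR m * 4 + INR r) / 4 = INR m + INR r / 4) by field.
rewrite Rpower_plus Rpower_pow; last lra.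
have hb : (Rpower (9/5) (INR r / 4) <= 9/5).
  rewrite -{2}(Rpower_1 (9/5)); last lra.
  apply: Rle_Rpower; first lra.
  have : (INR r <= 3).
    have : (r <= 3)%coq_nat by apply/leP.
    move/le_INR. simpl. lra.
  lra.
rewrite !Rpow_mult_distr in h.
have hq : (0 < 5 ^ m) by apply: pow_lt; lra.
have hp : (0 < 9 ^ m) by apply: pow_lt; lra.
have hy : (0 < 3 ^ k) by apply: pow_lt; lra.
have e9k : (9 ^ k.+1 = 9 * (3 ^ k * 3 ^ k)).
  rewrite /= -Rpow_mult_distr. by replace (3 * 3) with 9 by ring.
rewrite e9k in h.
have h2 : (2 * 9 ^ m <= 3 * 3 ^ k * 5 ^ m).
  apply: Rnot_lt_le => H.
  have pos : 0 < 2 * 9 ^ m + 3 * 3 ^ k * 5 ^ m by nra.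
  have pos2 : 0 < 3 ^ k * 5 ^ m by nra.
  nra.
have ex : ((9/5) ^ m * 5 ^ m = 9 ^ m).
  by rewrite -Rpow_mult_distr; congr (_ ^ _); field.
have hx : (0 <= (9/5) ^ m) by apply: pow_le; lra.
have hrp : (0 <= Rpower (9/5) (INR r / 4)) by apply: Rlt_le; apply: exp_pos.
have h3 : (2 * (9/5) ^ m <= 3 * 3 ^ k) by nra.
have h4 : ((9/5) ^ m * Rpower (9 / 5) (INR r / 4) <= (9/5) ^ m * (9/5)) by nra.
rewrite -[X in Rle _ X]Rmult_1_l.
apply: Rle_trans (_ : (/3 * ((9/5) ^ m * (9/5)) <= _)); first nra.
nra.
Qed.
End RealPart.

Section Comb.
Import GRing.Theory.
Local Open Scope ring_scope.
Definition T4 := (('F_3 * 'F_3) * ('F_3 * 'F_3))%type.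
Definition ent (X : 'M['F_3]_2) : T4 := ((X 0 0, X 0 1), (X 1 0, X 1 1)).
Definition mx_of (t : T4) : 'M['F_3]_2 :=
  \matrix_(i < 2, j < 2) if i == 0 then (if j == 0 then t.1.1 else t.1.2)
                         else (if j == 0 then t.2.1 else t.2.2).
Lemma ord2 (i : 'I_2) : i = 0 \/ i = 1.
Proof. by case: i => [[|[|]]] // ?; [left|right]; apply/val_inj. Qed.
Lemma ent_mx_of t : ent (mx_of t) = t.
Proof. by case: t => [[a b] [c d]]; rewrite /ent !mxE. Qed.
Lemma mx_of_ent X : mx_of (ent X) = X.
Proof.
apply/matrixP => i j; rewrite mxE.
by case: (ord2 i) => ->; case: (ord2 j) => ->.
Qed.

Lemma count_bij k (A : 'M['F_3]_(2, k)) (B : 'M['F_3]_(k, 2)) (S : {set T4}) :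
  A *m B = 1%:M ->
  #|[set M : 'M['F_3]_(k, 2) | ent (A *m M) \in S]| =
  (#|S| * #|[set N : 'M['F_3]_(k, 2) | A *m N == 0%R]|)%N.
Proof.
move=> AB.
pose f (M : 'M['F_3]_(k, 2)) : T4 * 'M['F_3]_(k, 2) := (ent (A *m M), M - B *m (A *m M)).
pose g (p : T4 * 'M['F_3]_(k, 2)) : 'M['F_3]_(k, 2) := B *m mx_of p.1 + p.2.
have fK : cancel f g.
  by move=> M; rewrite /f /g /= mx_of_ent addrC subrK.
rewrite -cardsX -(card_imset _ (can_inj fK)).
apply: eq_card => -[t N]; rewrite !inE /=.
apply/imsetP/andP => [[M]|[tS /eqP AN]].
  rewrite inE => MS [-> ->]; split => //.
  by rewrite mulmxBr (mulmxA A B) AB mul1mx subrr.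
exists (g (t, N)); last first.
  by rewrite /f /g /= mulmxDr (mulmxA A B) AB mul1mx AN addr0 ent_mx_of addrC addKr.
by rewrite inE /g /= mulmxDr (mulmxA A B) AB mul1mx AN addr0 ent_mx_of.
Qed.

Definition indep k (u v : 'rV['F_3]_k) := [&& u != 0, v != 0, v != u & v != -u].

Lemma F3cases (a : 'F_3) : a = 0 \/ a = 1 \/ a = -1.
Proof. by case: a => [[|[|[|]]] //= ?]; [left|right;left|right;right]; apply/val_inj. Qed.

Lemma indep_free k (u v : 'rV['F_3]_k) : indep u v ->
  exists B, col_mx u v *m B = 1%:M.
Proof.
case/and4P => u0 v0 vu vnu.
apply/row_freeP/inj_row_free => w.
rewrite -[w]hsubmxK mul_row_col [lsubmx w]mx11_scalar [rsubmx w]mx11_scalar !mul_scalar_mx.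
have Z : forall c : 'M['F_3]_1, c 0 0 = 0 -> c = 0.
  by move=> c c0; apply/matrixP => i j; rewrite (ord1 i) (ord1 j) c0 mxE.
rewrite -[in X in _ -> X](mx11_scalar (lsubmx w)) -[in X in _ -> X](mx11_scalar (rsubmx w)).
move: (lsubmx w) (rsubmx w) => l r H.
case: (F3cases (l 0 0)) => [a0|[a1|an]]; case: (F3cases (r 0 0)) => [b0|[b1|bn]];
  rewrite ?a0 ?a1 ?an ?b0 ?b1 ?bn ?scale0r ?scale1r ?scaleN1r ?add0r ?addr0 in H.
- by rewrite (Z _ a0) (Z _ b0) row_mx0.
- by rewrite H eqxx in v0.
- by move/eqP: H; rewrite oppr_eq0 (negbTE v0).
- by rewrite H eqxx in u0.
- by move/eqP: H; rewrite addrC addr_eq0 (negbTE vnu).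
- by move/eqP: H; rewrite subr_eq0 eq_sym (negbTE vu).
- by move/eqP: H; rewrite oppr_eq0 (negbTE u0).
- by move/eqP: H; rewrite addrC subr_eq0 (negbTE vu).
- by move/eqP: H; rewrite -opprD oppr_eq0 addrC addr_eq0 (negbTE vnu).
Qed.
Definition tet (x0 x1 : 'F_3) (j : nat) : 'F_3 :=
  match j with 0%N => x0 | 1%N => x1 | 2%N => x0 + x1 | _ => x0 - x1 end.
Definition okj (x0 x1 y0 y1 : 'F_3) (j : nat) := (tet x0 x1 j == tet y0 y1 j) && (tet x0 x1 j != 0).
Definition badP (p : ('F_3 * 'F_3) * ('F_3 * 'F_3)) : bool :=
  ~~ [|| okj p.1.1 p.1.2 p.2.1 p.2.2 0, okj p.1.1 p.1.2 p.2.1 p.2.2 1, okj p.1.1 p.1.2 p.2.1 p.2.2 2 | okj p.1.1 p.1.2 p.2.1 p.2.2 3].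
Lemma sumF3 (F : 'F_3 -> nat) : (\sum_(a : 'F_3) F a = F 0%R + F 1%R + F (-1)%R)%N.
Proof.
change (\sum_(a < 3) F a = F 0%R + F 1%R + F (-1)%R)%N.
rewrite !big_ord_recr big_ord0 /=. rewrite add0n. congr (_ + _ + _)%N; congr F; by apply/val_inj.
Qed.
Lemma sum_pair (I J : finType) (F : I * J -> nat) : (\sum_p F p = \sum_i \sum_j F (i, j))%N.
Proof. by rewrite pair_bigA; apply: eq_bigr => -[]. Qed.
Lemma sumPF3 (F : 'F_3 * 'F_3 -> nat) : (\sum_p F p = \sum_(i : 'F_3) (F (i, 0%R) + F (i, 1%R) + F (i, -1)%R))%N.
Proof. rewrite sum_pair. by apply: eq_bigr => i _; rewrite sumF3. Qed.
Lemma cardbad : #|[set p | badP p]| = 25%N.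
Proof.
rewrite -sum1_card big_mkcond /=.
rewrite sum_pair.
under eq_bigr => i _ do rewrite sumPF3 sumF3.
rewrite sumPF3 sumF3 !inE.
by [].
Qed.

Lemma okj_sw (x y : 'F_3) : (x == y) && (x != 0) = (y == x) && (y != 0).
Proof. by rewrite eq_sym; case: eqP => [->|]. Qed.
Lemma tet_opp a b j : tet (-a) (-b) j = - tet a b j.
Proof. by case: j => [|[|[|j]]] /=; rewrite ?opprD ?opprK. Qed.
Lemma badP_swap a b c d : badP ((a,b),(c,d)) = badP ((c,d),(a,b)).
Proof.
have S j : okj a b c d j = okj c d a b j by rewrite /okj okj_sw.
by rewrite /badP /= !S.
Qed.
Lemma badP_opp a b c d : badP ((-a,-b),(-c,-d)) = badP ((a,b),(c,d)).
Proof.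
have S j : okj (-a) (-b) (-c) (-d) j = okj a b c d j by rewrite /okj !tet_opp eqr_opp oppr_eq0.
by rewrite /badP /= !S.
Qed.

Lemma ent_col k (u v : 'rV['F_3]_k) (M : 'M['F_3]_(k, 2)) :
  ent (col_mx u v *m M) = (((u *m M) 0 0, (u *m M) 0 1), ((v *m M) 0 0, (v *m M) 0 1)).
Proof.
rewrite /ent mul_col_mx.
have -> : (0 : 'I_2) = lshift 1 (0 : 'I_1) by apply/val_inj.
have -> : (1 : 'I_2) = rshift 1 (0 : 'I_1) by apply/val_inj.
by rewrite !(col_mxEu (m1:=1) (m2:=1)) !(col_mxEd (m1:=1) (m2:=1)).
Qed.

Definition Bset k m (u v : 'rV['F_3]_k) :=
  [set G : {ffun 'I_m -> 'M['F_3]_(k, 2)} | [forall t, badP (ent (col_mx u v *m G t))]].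

Lemma card_T4 : #|[set: T4]| = 81%N.
Proof. by rewrite cardsT !card_prod card_Fp. Qed.

Lemma card_Bset k m (u v : 'rV['F_3]_k) : indep u v ->
  (#|Bset m u v| * 81 ^ m = (25 * 3 ^ (k * 2)) ^ m)%N.
Proof.
move=> /indep_free [B AB].
have -> : #|Bset m u v| = (#|[set M | ent (col_mx u v *m M) \in [set p | badP p]]| ^ m)%N.
  rewrite -[m in (_ ^ m)%N]card_ord -card_ffun_on. apply: eq_card => G. rewrite !inE.
  by apply/forallP/ffun_onP => H x; move: (H x); rewrite !inE.
rewrite -expnMn; congr (_ ^ _)%N.
have h1 := count_bij [set p | badP p] AB.
have h2 := count_bij [set: T4] AB.
rewrite cardbad in h1; rewrite card_T4 in h2.
have h3 : #|[set M : 'M['F_3]_(k, 2) | ent (col_mx u v *m M) \in [set: T4]]| = (3 ^ (k * 2))%N.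
  have -> : #|[set M : 'M['F_3]_(k, 2) | ent (col_mx u v *m M) \in [set: T4]]| = #|{: 'M['F_3]_(k, 2)}|.
    by apply: eq_card => M; rewrite !inE.
  by rewrite card_mx card_Fp.
by rewrite h1 -h3 h2 mulnAC mulnA.
Qed.

Lemma sub_sum (I : finType) (A B : {pred I}) (F : I -> nat) :
  {subset A <= B} -> (\sum_(i in A) F i <= \sum_(i in B) F i)%N.
Proof.
move=> sAB; rewrite big_mkcond [X in (_ <= X)%N]big_mkcond /=.
apply: leq_sum => i _; case: ifP => iA //; by rewrite (sAB _ iA).
Qed.

Lemma neg_self k (u : 'rV['F_3]_k) : u = -u -> u = 0.
Proof.
move=> H; apply/rowP => j; have := congr1 (fun X : 'rV['F_3]_k => X 0 j) H.
rewrite /= !mxE; by case: (F3cases (u 0 j)) => [->|[->|->]].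
Qed.

Lemma indep_sym k (u v : 'rV['F_3]_k) : indep u v -> indep v u.
Proof.
case/and4P => u0 v0 vu vnu; apply/and4P; split => //; first by rewrite eq_sym.
by apply: contra vnu => /eqP ->; rewrite opprK.
Qed.

Lemma indep_opp k (u v : 'rV['F_3]_k) : indep u v -> indep (-u) (-v).
Proof.
case/and4P => u0 v0 vu vnu; apply/and4P; split; rewrite ?oppr_eq0 ?eqr_opp //.
Qed.

Lemma Bset_sym k m (u v : 'rV['F_3]_k) G : G \in Bset m u v -> G \in Bset m v u.
Proof.
rewrite !inE => /forallP H; apply/forallP => t; have := H t.
by rewrite !ent_col badP_swap.
Qed.

Lemma Bset_opp k m (u v : 'rV['F_3]_k) G : G \in Bset m u v -> G \in Bset m (-u) (-v).
Proof.
rewrite !inE => /forallP H; apply/forallP => t; have := H t.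
by rewrite !ent_col !mulNmx !mxE badP_opp.
Qed.

Lemma card_Gs k m : #|{: {ffun 'I_m -> 'M['F_3]_(k, 2)}}| = ((3 ^ (k * 2)) ^ m)%N.
Proof. by rewrite card_ffun card_mx card_Fp // card_ord. Qed.

End Comb.

Section Comb2.
Import GRing.Theory.
Local Open Scope ring_scope.
Lemma exists_good k m : (9 ^ k * 25 ^ m < 4 * 81 ^ m)%N ->
  exists G : {ffun 'I_m -> 'M['F_3]_(k, 2)}, forall u v, indep u v ->
    exists t, ~~ badP (ent (col_mx u v *m G t)).
Proof.
move=> hk.
pose Pairs := [set P : 'rV['F_3]_k * 'rV['F_3]_k | indep P.1 P.2].
pose Bad := [set G : {ffun 'I_m -> 'M['F_3]_(k, 2)} | [exists P in Pairs, G \in Bset m P.1 P.2]].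
pose c (G : {ffun 'I_m -> 'M['F_3]_(k, 2)}) := (\sum_(P in Pairs) (G \in Bset m P.1 P.2))%N.
have c4 : forall G, G \in Bad -> (4 <= c G)%N.
  move=> G; rewrite inE => /existsP [[u v] /andP [Puv GB]].
  rewrite inE /= in Puv GB.
  pose Four := (u, v) |: ((v, u) |: ((-u, -v) |: [set (-v, -u)])).
  have sub : {subset Four <= Pairs}.
    move=> P; rewrite !inE => /or4P [] /eqP -> /=.
    - exact: Puv.
    - exact: indep_sym.
    - exact: indep_opp.
    - exact/indep_opp/indep_sym.
  have u0 : u != 0 by case/and4P: Puv.
  have v0 : v != 0 by case/and4P: Puv.
  have vu : v != u by case/and4P: Puv.
  have vnu : v != - u by case/and4P: Puv.
  have nu : u != - u by apply/negP => /eqP /neg_self /eqP; apply/negP.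
  have nv : v != - v by apply/negP => /eqP /neg_self /eqP; apply/negP.
  have uvn : u != - v by apply: contra vnu => /eqP ->; rewrite opprK.
  have c4' : #|Four| = 4%N.
    rewrite !cardsU1 cards1 !inE !xpair_eqE.
    rewrite [u == v]eq_sym (negbTE vu) (negbTE nu) (negbTE uvn) (negbTE vnu) (negbTE nv).
    by rewrite eqr_opp [u == v]eq_sym (negbTE vu).
  rewrite -c4' -sum1_card.
  apply: (leq_trans _ (sub_sum _ sub)).
  apply: leq_sum => P HP; rewrite !inE in HP; case/or4P: HP => /eqP -> /=.
  - by rewrite GB.
  - by rewrite (Bset_sym GB).
  - by rewrite (Bset_opp GB).
  - by rewrite (Bset_opp (Bset_sym GB)).
have hsum : (4 * #|Bad| <= \sum_G c G)%N.
  rewrite mulnC -sum_nat_const.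
  apply: (leq_trans _ (sub_sum _ (A := mem Bad) (B := mem predT) (fun G _ => isT))).
  apply: leq_sum => G; exact: c4.
have hex : (\sum_G c G = \sum_(P in Pairs) #|Bset m P.1 P.2|)%N.
  rewrite /c exchange_big /=; apply: eq_bigr => P _.
  rewrite -sum1_card [RHS]big_mkcond /=; apply: eq_bigr => G _.
  by case: (G \in Bset m P.1 P.2).
have hc : ((\sum_(P in Pairs) #|Bset m P.1 P.2|) * 81 ^ m = #|Pairs| * (25 * 3 ^ (k * 2)) ^ m)%N.
  rewrite big_distrl /= -sum_nat_const; apply: eq_bigr => P; rewrite inE => HP.
  exact: card_Bset.
have hP : (#|Pairs| <= 9 ^ k)%N.
  apply: (leq_trans (max_card _)).
  by rewrite card_prod card_mx card_Fp // mul1n -expnMn.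
suff : (#|Bad| < #|{: {ffun 'I_m -> 'M['F_3]_(k, 2)}}|)%N.
  move=> lt.
  case: (pickP (fun G => G \notin Bad)) => [G GB|H]; last first.
    have : Bad = setT by apply/setP => G; have := H G; rewrite !inE negbK => ->.
    by move=> E; rewrite E cardsT ltnn in lt.
  exists G => u v huv.
  have : G \notin Bset m u v.
    apply: contra GB => GB'; rewrite inE; apply/existsP; exists (u, v).
    by rewrite /= GB' andbT inE.
  by rewrite inE => /forallPn.
rewrite card_Gs.
move: hsum; rewrite hex => hsum.
have h1 : (4 * #|Bad| * 81 ^ m <= 9 ^ k * 25 ^ m * (3 ^ (k * 2)) ^ m)%N.
  apply: (leq_trans (leq_mul hsum (leqnn _))); rewrite hc expnMn mulnA.
  by rewrite leq_mul2r leq_mul2r hP !orbT.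
have Ypos : (0 < (3 ^ (k * 2)) ^ m)%N by rewrite !expn_gt0.
move: h1 hk Ypos.
move: (9 ^ k * 25 ^ m)%N (81 ^ m)%N ((3 ^ (k * 2)) ^ m)%N #|Bad| => W Z Y B h1 hk Ypos.
rewrite ltnNge; apply/negP => hYB.
have h2 : (4 * Y * Z <= W * Y)%N.
  apply: leq_trans h1; by rewrite leq_mul2r leq_mul2l hYB !orbT.
have h3 : (W * Y < 4 * Z * Y)%N by rewrite ltn_pmul2r.
by move: (leq_ltn_trans h2 h3); rewrite mulnAC ltnn.
Qed.
End Comb2.

From mathcomp Require Import zify.
Section Comb3.
Import GRing.Theory.
Local Open Scope ring_scope.

Lemma tri (a d : 'F_3) : d != 0 -> [set a + d; a - d; a] = [set: 'F_3].
Proof.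
move=> nd; apply/setP => w; rewrite !inE.
case: (F3cases d) => Hd; first by rewrite Hd eqxx in nd.
by case: (F3cases a) => [->|[->|->]]; case: Hd => ->; case: (F3cases w) => [->|[->|->]].
Qed.

Lemma choose_k m : (3 <= m)%N -> exists k, [/\ (2 <= k)%N, (9 ^ k * 25 ^ m < 4 * 81 ^ m)%N
   & (4 * 81 ^ m <= 9 ^ k.+1 * 25 ^ m)%N].
Proof.
move=> hm.
have base : (9 ^ 2 * 25 ^ m < 4 * 81 ^ m)%N.
  rewrite -(subnKC hm) !expnD (expnS 81 2).
  have -> : (9 ^ 2 = 81)%N by [].
  have h1 : (25 ^ (m - 3) <= 81 ^ (m - 3))%N.
    elim: (m - 3)%N => // j IH; rewrite !expnS; exact: leq_mul.
  have h2 : (25 ^ 3 < 4 * 81 ^ 2)%N by [].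
  have Ypos : (0 < 81 ^ (m - 3))%N by rewrite expn_gt0.
  move: h1 h2 Ypos; move: (25 ^ (m - 3))%N (81 ^ (m - 3))%N (25 ^ 3)%N (81 ^ 2)%N => X Y a b h1 h2 Ypos.
  nia.
pose P k := (9 ^ k * 25 ^ m < 4 * 81 ^ m)%N.
have exP : exists k, P k by exists 2%N.
have ubP : forall k, P k -> (k <= 4 * 81 ^ m)%N.
  move=> k hk; apply: ltnW; apply: leq_ltn_trans hk.
  apply: leq_trans (ltnW (ltn_expl k (_ : 1 < 9)%N)) _ => //.
  by rewrite leq_pmulr // expn_gt0.
case: (ex_maxnP exP ubP) => k Pk maxk.
exists k; split => //.
- exact: maxk _ base.
- rewrite leqNgt; apply/negP => h; have := maxk _ h; by rewrite ltnn.
Qed.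

Definition cw k m (G : {ffun 'I_m -> 'M['F_3]_(k, 2)}) (u : 'rV['F_3]_k) (i : nat) : 'F_3 :=
  if (insub (i %/ 4)%N : option 'I_m) is Some t then
    tet ((u *m G t) 0 0) ((u *m G t) 0 1) (i %% 4)%N else 0.
Definition fc n k m (G : {ffun 'I_m -> 'M['F_3]_(k, 2)}) (u : 'rV['F_3]_k) : 'rV['F_3]_n :=
  \row_(i < n) cw G u i.

Lemma tetL a x0 x1 y0 y1 j : tet (a * x0 + y0) (a * x1 + y1) j = a * tet x0 x1 j + tet y0 y1 j.
Proof.
case: j => [|[|[|j]]] //=; first by rewrite mulrDr addrACA.
by rewrite mulrBr opprD addrACA.
Qed.

Lemma tet0 j : tet 0 0 j = 0.
Proof. by case: j => [|[|[|j]]] //=; rewrite ?addr0 ?subr0. Qed.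

Lemma fcL n k m (G : {ffun 'I_m -> 'M['F_3]_(k, 2)}) a (u v : 'rV['F_3]_k) :
  fc n G (a *: u + v) = a *: fc n G u + fc n G v.
Proof.
apply/rowP => i; rewrite !mxE /cw; case: insub => [t|]; last by rewrite mulr0 addr0.
rewrite mulmxDl -scalemxAl !mxE; exact: tetL.
Qed.

Lemma fc0 n k m (G : {ffun 'I_m -> 'M['F_3]_(k, 2)}) : fc n G 0 = 0.
Proof.
apply/rowP => i; rewrite !mxE /cw; case: insub => [t|] //.
by rewrite mul0mx !mxE tet0.
Qed.

Lemma fcB n k m (G : {ffun 'I_m -> 'M['F_3]_(k, 2)}) (u w : 'rV['F_3]_k) :
  fc n G (u - w) = fc n G u - fc n G w.
Proof. by rewrite [u - w]addrC -(scaleN1r w) fcL scaleN1r addrC. Qed.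

Lemma subE n (A B : 'rV['F_3]_n) i : (A - B) 0 i = A 0 i - B 0 i.
Proof. by rewrite !mxE. Qed.

Lemma fc_coord n k m (G : {ffun 'I_m -> 'M['F_3]_(k, 2)}) (hmn : (4 * m <= n)%N)
  (t : 'I_m) (j : nat) : (j < 4)%N ->
  exists i : 'I_n, forall u, fc n G u 0 i = tet ((u *m G t) 0 0) ((u *m G t) 0 1) j.
Proof.
move=> hj.
have lt : (t * 4 + j < n)%N by have := ltn_ord t; lia.
exists (Ordinal lt) => u; rewrite mxE /cw /=.
have -> : ((t * 4 + j) %/ 4 = t)%N by rewrite divnMDl // divn_small // addn0.
have -> : ((t * 4 + j) %% 4 = j)%N by rewrite modnMDl modn_small.
by rewrite valK.
Qed.

Lemma good_coord n k m (G : {ffun 'I_m -> 'M['F_3]_(k, 2)}) (hmn : (4 * m <= n)%N)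
  (HG : forall u v, indep u v -> exists t, ~~ badP (ent (col_mx u v *m G t)))
  (u v : 'rV['F_3]_k) : indep u v ->
  exists i : 'I_n, fc n G u 0 i = fc n G v 0 i /\ fc n G u 0 i != 0.
Proof.
move=> /HG [t]; rewrite ent_col /badP negbK /okj.
case/or4P => /andP [/eqP E NZ].
- have [i Hi] := @fc_coord n k m G hmn t 0%N isT.
  by exists i; rewrite !Hi; split.
- have [i Hi] := @fc_coord n k m G hmn t 1%N isT.
  by exists i; rewrite !Hi; split.
- have [i Hi] := @fc_coord n k m G hmn t 2%N isT.
  by exists i; rewrite !Hi; split.
- have [i Hi] := @fc_coord n k m G hmn t 3%N isT.
  by exists i; rewrite !Hi; split.
Qed.

Lemma ent_neq k (X Y : 'rV['F_3]_k) i : X 0 i != Y 0 i -> X != Y.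
Proof. by apply: contra => /eqP ->. Qed.

Lemma fc_inj n k m (G : {ffun 'I_m -> 'M['F_3]_(k, 2)}) (hmn : (4 * m <= n)%N)
  (HG : forall u v, indep u v -> exists t, ~~ badP (ent (col_mx u v *m G t)))
  (hk : (1 < k)%N) : injective (fc n G).
Proof.
move=> u w E; apply/eqP; rewrite -subr_eq0; apply/negPn/negP => d0.
have fd : fc n G (u - w) = 0 by rewrite fcB E subrr.
move: d0 fd; move: (u - w) => d d0 fd.
pose i0 : 'I_k := Ordinal (ltnW hk). pose i1 : 'I_k := Ordinal hk.
pose e0 : 'rV['F_3]_k := delta_mx 0 i0. pose e1 : 'rV['F_3]_k := delta_mx 0 i1.
have e00 : e0 0 i0 = 1 by rewrite mxE !eqxx.
have e01 : e0 0 i1 = 0 by rewrite mxE.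
have e10 : e1 0 i0 = 0 by rewrite mxE.
have e11 : e1 0 i1 = 1 by rewrite mxE !eqxx.
have o10 : (1 : 'F_3) != 0 by [].
have o01 : (0 : 'F_3) != 1 by [].
have e0n : e0 != 0 by apply: (ent_neq (i := i0)); rewrite e00 mxE.
have e1n : e1 != 0 by apply: (ent_neq (i := i1)); rewrite e11 mxE.
have [e He] : exists e, indep d e.
  case: (boolP (indep d e0)) => [h|h]; first by exists e0.
  exists e1.
  have e0d : e0 = d \/ e0 = -d.
    move: h; rewrite /indep d0 e0n /= negb_and !negbK.
    by case/orP => /eqP ->; [left|right].
  apply/and4P; split => //.
  - case: e0d => [<-|H].
      by apply: (ent_neq (i := i0)); rewrite e10 e00.
    have -> : d = - e0 by rewrite H opprK.
    by apply: (ent_neq (i := i1)); rewrite e11 mxE e01 oppr0.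
  - case: e0d => [<-|<-].
      by apply: (ent_neq (i := i1)); rewrite e11 mxE e01 oppr0.
    by apply: (ent_neq (i := i0)); rewrite e10 e00.
have [i [_ Hi]] := good_coord hmn HG He.
by rewrite fd mxE eqxx in Hi.
Qed.

Lemma main_lemma : exists N : nat, forall n : nat, (N <= n)%N ->
    exists C : {set 'rV['F_3]_n},
      is_linear_code C /\ is_trifferent C /\
      Rle (Rmult (Rinv (INR 3%N)) (Rpower (Rdiv (INR 9%N) (INR 5%N)) (Rdiv (INR n) (INR 4%N))))
          (INR #|C|).
Proof.
exists 12%N => n hn.
pose m := (n %/ 4)%N.
have hm : (3 <= m)%N by rewrite /m leq_divRL.
have hmn : (4 * m <= n)%N by rewrite mulnC leq_divM.
have [k [hk2 hk1 hk3]] := choose_k hm.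
have [G HG] := exists_good hk1.
have hk : (1 < k)%N by [].
pose C := [set fc n G u | u : 'rV['F_3]_k].
exists C; split; [|split].
- split.
  + by apply/imsetP; exists 0 => //; rewrite fc0.
  + move=> x y /imsetP [u _ ->] /imsetP [v _ ->]; apply/imsetP; exists (u + v) => //.
    by have := fcL n G 1 u v; rewrite !scale1r => ->.
  + move=> a x /imsetP [u _ ->]; apply/imsetP; exists (a *: u) => //.
    by have := fcL n G a u 0; rewrite addr0 fc0 addr0 => ->.
- move=> x y z /imsetP [ux _ ->] /imsetP [uy _ ->] /imsetP [uz _ ->] nxy nyz nxz.
  suff [i [Ei Ni]] : exists i : 'I_n,
      fc n G (ux - uz) 0 i = fc n G (uz - uy) 0 i /\ fc n G (ux - uz) 0 i != 0.
    exists i; move: Ei Ni; rewrite !fcB !subE.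
    set a := fc n G ux 0 i; set b := fc n G uy 0 i; set c := fc n G uz 0 i => Ei Ni.
    have -> : a = c + (a - c) by rewrite addrC subrK.
    have -> : b = c - (a - c) by rewrite Ei opprB addrC subrK.
    exact: tri.
  case: (eqVneq (uz - uy) (ux - uz)) => [E|NE].
    have nz : fc n G ux - fc n G uz != 0 by rewrite subr_eq0.
    case: (pickP (fun i : 'I_n => (fc n G ux - fc n G uz) 0 i != 0)) => [i Hi|H].
      by exists i; rewrite E fcB; split.
    exfalso; apply: (negP nz); apply/eqP/rowP => i.
    by move: (H i) => /negbFE /eqP ->; rewrite mxE.
  apply: (good_coord hmn HG); apply/and4P; split => //.
  - by rewrite subr_eq0; apply: contra nxz => /eqP ->.
  - by rewrite subr_eq0; apply: contra nyz => /eqP ->.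
  - by rewrite opprB; apply: contra nxy => /eqP /addrI /oppr_inj ->.
- rewrite card_imset; last exact: fc_inj hmn HG hk.
  rewrite card_mx card_Fp // mul1n.
  apply: (@real_part n m (n %% 4)%N k); [rewrite /m; exact: divn_eq | by rewrite ltn_pmod | exact: hk3].
Qed.
End Comb3.

Theorem theorem1p6 :
  exists N : nat, forall n : nat, (N <= n)%N ->
    exists C : {set 'rV['F_3]_n},
      is_linear_code C /\ is_trifferent C /\
      Rle (Rmult (Rinv (INR 3)) (Rpower (Rdiv (INR 9) (INR 5)) (Rdiv (INR n) (INR 4))))
          (INR #|C|).
Proof. exact: main_lemma. Qed.
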